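(* Let $X\in C^\infty(\mathbb T;\mathbb R)$ have at least one zero and assume all its zeroes are non-degenerate (i.e. $X(x_0)=0\Rightarrow X'(x_0)\neq0$). Let $h(x,\xi):=\xi X(x)$ on $T^*\mathbb T\simeq\mathbb T\times\mathbb R$. Then there exist a function $a\in C^\infty(T^*\mathbb T\setminus\{\xi=0\};\mathbb R)$, positively homogeneous of degree one, and $\delta>0$ such that $$\{h,a\}(x,\xi)\ge\delta|\xi|\qquad\forall (x,\xi)\in T^*\mathbb T,\ \xi\neq0,$$ and there exists a non-empty open set $\mathcal W\subset\mathbb T$ such that $a(x,\xi)\le-\frac{|\xi|}2$ for all $x\in\mathcal W$ and $\xi\neq0$.
   Context: $\mathbb T:=\mathbb R/2\pi\mathbb Z$. Poisson bracket: $\{h,f\}:=\partial_\xi h\,\partial_xf-\partial_xh\,\partial_\xi f$. A function $f$ on $T^*\mathbb T\setminus\{\xi=0\}$ is positively homogeneous of degree $\rho$ if $f(x,\lambda\xi)=\lambda^\rho f(x,\xi)$ for all $\lambda>0$. A function $a$ with the stated properties is called an escape function for $h$. *)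

(* Defs.v *)
From Stdlib Require Import Reals Lra List.
From Coquelicot Require Import Coquelicot.
Open Scope R_scope.

(* Functions on T = R/2piZ are represented as 2pi-periodic functions on R
   (in the first variable for functions on T^*T = T x R). *)
Definition periodic1 (f : R -> R) : Prop := forall x, f (x + 2 * PI) = f x.
Definition periodic2 (f : R -> R -> R) : Prop :=
  forall x xi, f (x + 2 * PI) xi = f x xi.

Definition smooth1 (f : R -> R) : Prop :=
  forall (n : nat) (x : R), ex_derive (Derive_n f n) x.

(* Iterated partial derivative along a word of directions
   (true = d/dx, false = d/dxi), innermost derivative last in the list. *)
Fixpoint pderiv (w : list bool) (f : R -> R -> R) : R -> R -> R :=
  match w with
  | nil => f
  | b :: w' =>
      let g := pderiv w' f in
      if b then fun x xi => Derive (fun t => g t xi) x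
      else fun x xi => Derive (fun e => g x e) xi
  end.

Definition smooth2_on (U : R -> R -> Prop) (f : R -> R -> R) : Prop :=
  forall w : list bool, forall x xi, U x xi ->
    ex_derive (fun t => pderiv w f t xi) x /\
    ex_derive (fun e => pderiv w f x e) xi /\
    continuous (fun p : R * R => pderiv w f (fst p) (snd p)) (x, xi).

Definition off_zero (x xi : R) : Prop := xi <> 0.

Definition pos_homogeneous (rho : R) (f : R -> R -> R) : Prop :=
  forall x xi lam, xi <> 0 -> 0 < lam -> f x (lam * xi) = Rpower lam rho * f x xi.

Definition poisson (h f : R -> R -> R) (x xi : R) : R :=
  Derive (fun e => h x e) xi * Derive (fun t => f t xi) x
  - Derive (fun t => h t xi) x * Derive (fun e => f x e) xi.

(* Main.v *)
Require Import Defs.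
From Stdlib Require Import Reals Lra Lia ZArith List Classical.
From Coquelicot Require Import Coquelicot.
Open Scope R_scope.

Fixpoint sm (n:nat) (f:R->R) : Prop :=
  match n with O => forall x, ex_derive f x
  | S k => (forall x, ex_derive f x) /\ sm k (Derive f) end.

Lemma sm_ex n f : sm n f -> forall x, ex_derive f x.
Proof. destruct n; simpl; intros H; [exact H| apply H]. Qed.

Lemma sm_ext n : forall f g, (forall x, f x = g x) -> sm n f -> sm n g.
Proof.
induction n; simpl; intros f g E H.
- intro x; apply ex_derive_ext with f; auto.
- destruct H as [H1 H2]; split.
  + intro x; apply ex_derive_ext with f; auto.
  + apply IHn with (Derive f); auto. intro x; apply Derive_ext; auto.
Qed.

Lemma sm_S n : forall f, sm (S n) f -> sm n f.
Proof.
induction n; simpl; intros f H. apply H.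
destruct H as [H1 [H2 H3]]. split; auto. apply IHn. simpl; auto.
Qed.

Lemma sm_const n c : sm n (fun _ => c).
Proof.
revert c; induction n; simpl; intros c.
- intros; apply ex_derive_const.
- split. intros; apply ex_derive_const.
  apply sm_ext with (fun _ => 0). intros; rewrite Derive_const; auto. apply IHn.
Qed.

Lemma sm_plus n : forall f g, sm n f -> sm n g -> sm n (fun x => f x + g x).
Proof.
induction n; intros f g Hf Hg.
- simpl; intros; apply (ex_derive_plus f g); [apply (sm_ex 0) | apply (sm_ex 0)]; auto.
- split. intros; apply (ex_derive_plus f g); [apply (sm_ex (S n)) | apply (sm_ex (S n))]; auto.
  apply sm_ext with (fun x => Derive f x + Derive g x).
  intros; rewrite Derive_plus; auto; [apply (sm_ex (S n)) | apply (sm_ex (S n))]; auto.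
  apply IHn; [apply Hf|apply Hg].
Qed.

Lemma sm_opp n : forall f, sm n f -> sm n (fun x => - f x).
Proof.
induction n; intros f Hf.
- simpl; intros; apply (ex_derive_opp f); apply (sm_ex 0); auto.
- split. intros; apply (ex_derive_opp f); apply (sm_ex (S n)); auto.
  apply sm_ext with (fun x => - Derive f x).
  intros; rewrite Derive_opp; auto.
  apply IHn; apply Hf.
Qed.

Lemma sm_mult n : forall f g, sm n f -> sm n g -> sm n (fun x => f x * g x).
Proof.
induction n; intros f g Hf Hg.
- simpl; intros; apply (ex_derive_mult f g); [apply (sm_ex 0) | apply (sm_ex 0)]; auto.
- split. intros; apply (ex_derive_mult f g); [apply (sm_ex (S n)) | apply (sm_ex (S n))]; auto.
  apply sm_ext with (fun x => Derive f x * g x + f x * Derive g x).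
  intros; rewrite Derive_mult; auto; [apply (sm_ex (S n)) | apply (sm_ex (S n))]; auto.
  apply sm_plus; apply IHn; try apply Hf; try apply Hg; apply sm_S; auto.
Qed.

Lemma sm_inv n : forall f, (forall x, f x <> 0) -> sm n f -> sm n (fun x => / f x).
Proof.
induction n; intros f Hn Hf.
- simpl; intros; apply (ex_derive_inv f); auto; apply (sm_ex 0); auto.
- split. intros; apply (ex_derive_inv f); auto; apply (sm_ex (S n)); auto.
  apply sm_ext with (fun x => - Derive f x * (/ f x * / f x)).
  intros; rewrite Derive_inv; auto. field; auto. apply (sm_ex (S n)); auto.
  apply sm_mult. apply sm_opp; apply Hf.
  apply sm_mult; apply IHn; auto; apply sm_S; auto.
Qed.

Definition smooth (f : R -> R) := forall n, sm n f.

Lemma smooth_Derive_n f : smooth f -> forall n x, ex_derive (Derive_n f n) x.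
Proof.
intros H n; revert f H; induction n; intros f H x.
- apply (sm_ex 0); apply H.
- apply ex_derive_ext with (Derive_n (Derive f) n).
  intros t. rewrite (Derive_n_comp f n 1). replace (n+1)%nat with (S n) by lia. reflexivity.
  apply IHn. intros k. apply (H (S k)).
Qed.

Lemma Derive_n_smooth f : (forall n x, ex_derive (Derive_n f n) x) -> smooth f.
Proof.
intros H n; revert f H; induction n; intros f H.
- intro x; apply (H 0%nat).
- split. intro x; apply (H 0%nat). apply IHn. intros k x.
  apply ex_derive_ext with (Derive_n f (S k)).
  intros t. replace (S k) with (k+1)%nat by lia. rewrite <- (Derive_n_comp f k 1). reflexivity.
  apply H.
Qed.

Lemma smooth_Derive f : smooth f -> smooth (Derive f).
Proof. intros H n. apply (H (S n)). Qed.

Lemma smooth_cont (f : R -> R) : (forall x, ex_derive f x) -> forall x, continuous f x.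
Proof. intros H x; apply (ex_derive_continuous f); auto. Qed.

Lemma antider (w : R -> R) (c : R) : (forall x, continuous w x) ->
  forall x, is_derive (fun y => RInt w c y) x (w x).
Proof.
intros Hc x. apply (is_derive_RInt w (fun y => RInt w c y) c); auto.
apply filter_forall. intros b. apply (@RInt_correct R_CompleteNormedModule).
apply (@ex_RInt_continuous R_CompleteNormedModule). intros; auto.
Qed.

Lemma per_shift (f : R -> R) (P : forall x, f (x + 2*PI) = f x) :
  forall n x, f (x + INR n * (2*PI)) = f x /\ f (x - INR n * (2*PI)) = f x.
Proof.
induction n; intros x.
- simpl. split; f_equal; ring.
- rewrite S_INR. split.
  + replace (x + (INR n + 1) * (2*PI)) with ((x + INR n * (2*PI)) + 2*PI) by ring.
    rewrite P. apply IHn.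
  + rewrite <- (P (x - (INR n + 1) * (2 * PI))).
    replace (x - (INR n + 1) * (2 * PI) + 2*PI) with (x - INR n * (2*PI)) by ring.
    apply IHn.
Qed.

Lemma per_reduce (f : R -> R) (P : forall x, f (x + 2*PI) = f x) :
  forall x, exists y, 0 <= y <= 2*PI /\ f x = f y.
Proof.
intros x. pose proof PI_RGT_0 as HP.
set (k := Int_part (x / (2*PI))).
destruct (base_Int_part (x / (2*PI))) as [H1 H2]. fold k in H1, H2.
exists (x - IZR k * (2*PI)). split.
- assert (IZR k * (2*PI) <= x /\ x - IZR k * (2*PI) < 2*PI).
  { split.
    - apply Rmult_le_reg_r with (/ (2*PI)). apply Rinv_0_lt_compat; lra.
      rewrite Rmult_assoc, Rinv_r by lra. lra.
    - assert (x / (2*PI) < IZR k + 1) by lra.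
      apply Rmult_lt_compat_r with (r := 2*PI) in H; [|lra].
      unfold Rdiv in H. rewrite Rmult_assoc, Rinv_l in H by lra. lra. }
  lra.
- destruct (Z.le_ge_cases 0 k) as [Hk|Hk].
  + rewrite <- (Z2Nat.id k Hk). rewrite <- INR_IZR_INZ.
    symmetry; apply per_shift; auto.
  + replace k with (- Z.of_nat (Z.to_nat (- k)))%Z by lia.
    rewrite opp_IZR, <- INR_IZR_INZ.
    replace (x - - INR (Z.to_nat (- k)) * (2 * PI)) with (x + INR (Z.to_nat (- k)) * (2 * PI)) by ring.
    symmetry; apply per_shift; auto.
Qed.

Lemma per_min (f : R -> R) (P : forall x, f (x + 2*PI) = f x) :
  (forall x, continuous f x) -> exists y, forall x, f y <= f x.
Proof.
intros Hc. destruct (continuity_ab_min f 0 (2*PI)) as [m [Hm _]].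
pose proof PI_RGT_0; lra.
intros c _. apply continuity_pt_filterlim. apply Hc.
exists m. intros x. destruct (per_reduce f P x) as [y [Hy E]]. rewrite E. auto.
Qed.

Lemma per_max (f : R -> R) (P : forall x, f (x + 2*PI) = f x) :
  (forall x, continuous f x) -> exists y, forall x, f x <= f y.
Proof.
intros Hc. destruct (continuity_ab_maj f 0 (2*PI)) as [m [Hm _]].
pose proof PI_RGT_0; lra.
intros c _. apply continuity_pt_filterlim. apply Hc.
exists m. intros x. destruct (per_reduce f P x) as [y [Hy E]]. rewrite E. auto.
Qed.

Lemma Derive_per (f : R -> R) (P : forall x, f (x + 2*PI) = f x) :
  (forall x, ex_derive f x) -> forall x, Derive f (x + 2*PI) = Derive f x.
Proof.
intros Hd x.
assert (H : is_derive (fun y => f (y + 2*PI)) x (Derive f (x + 2*PI))).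
{ replace (Derive f (x + 2*PI)) with (scal 1 (Derive f (x + 2*PI))) by (change (1 * Derive f (x + 2*PI) = Derive f (x + 2*PI)); ring).
  apply (is_derive_comp f (fun y => y + 2*PI)).
  apply Derive_correct; auto.
  auto_derive; auto. }
apply is_derive_unique in H. rewrite <- H. apply Derive_ext. auto.
Qed.

Definition cf (k : nat) (e : R) : R :=
  match k with 0%nat => Rabs e | 1%nat => sign e | _ => 0 end.

Fixpoint nf (w : list bool) : nat := match w with nil => 0%nat | b :: w' => if b then nf w' else S (nf w') end.
Fixpoint nx (w : list bool) : nat := match w with nil => 0%nat | b :: w' => if b then S (nx w') else nx w' end.

Lemma dconst (c x : R) : is_derive (fun _ : R => c) x 0.
Proof. apply (@is_derive_const R_AbsRing). Qed.

Lemma loc_nz (xi : R) : xi <> 0 -> locally xi (fun e => e <> 0).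
Proof.
intros H. destruct (Rlt_or_le 0 xi) as [Hp|Hn].
- apply (locally_open (fun u => 0 < u)). apply open_gt. intros; lra. auto.
- apply (locally_open (fun u => u < 0)). apply open_lt. intros; lra. lra.
Qed.

Lemma cf_deriv k xi : xi <> 0 -> is_derive (cf k) xi (cf (S k) xi).
Proof.
intros H. destruct k as [|[|k]]; simpl.
- replace (sign xi) with (sign xi * 1) by ring.
  apply (is_derive_Rabs (fun y => y)). apply (@is_derive_id R_AbsRing). auto.
- destruct (Rlt_or_le 0 xi) as [Hp|Hn].
  + apply is_derive_ext_loc with (fun _ => 1).
    apply (locally_open (fun u => 0 < u)). apply open_gt. intros; rewrite sign_eq_1; auto. auto.
    apply dconst.
  + apply is_derive_ext_loc with (fun _ => -1).
    apply (locally_open (fun u => u < 0)). apply open_lt. intros; rewrite sign_eq_m1; auto. lra.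
    apply dconst.
- apply dconst.
Qed.

Lemma pd (q : R -> R) : forall w x xi, xi <> 0 ->
  pderiv w (fun x xi => Rabs xi * q x) x xi = cf (nf w) xi * Derive_n q (nx w) x.
Proof.
induction w as [|b w IH]; intros x xi H.
- simpl. reflexivity.
- destruct b; simpl.
  + rewrite (Derive_ext _ (fun t => cf (nf w) xi * Derive_n q (nx w) t)).
    apply Derive_scal. intros t; apply IH; auto.
  + rewrite (Derive_ext_loc _ (fun e => Derive_n q (nx w) x * cf (nf w) e)).
    rewrite Derive_scal. rewrite (is_derive_unique _ _ _ (cf_deriv (nf w) xi H)). apply Rmult_comm.
    apply filter_imp with (fun e => e <> 0). intros e He. rewrite IH; auto. apply Rmult_comm.
    apply loc_nz; auto.
Qed.

Lemma cf_cont k xi : xi <> 0 -> continuous (cf k) xi.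
Proof. intros H. apply (ex_derive_continuous (cf k)). eexists; apply cf_deriv; auto. Qed.

Lemma smooth2_abs (q : R -> R) : (forall n x, ex_derive (Derive_n q n) x) ->
  smooth2_on off_zero (fun x xi => Rabs xi * q x).
Proof.
intros Hq w x xi H. unfold off_zero in H. split; [|split].
- apply ex_derive_ext with (fun t => cf (nf w) xi * Derive_n q (nx w) t).
  intros t; rewrite pd; auto.
  destruct (Hq (nx w) x) as [l Hl]. exists (cf (nf w) xi * l).
  apply (is_derive_scal (Derive_n q (nx w))). auto.
- apply ex_derive_ext_loc with (fun e => Derive_n q (nx w) x * cf (nf w) e).
  apply filter_imp with (fun e => e <> 0). intros e He. rewrite pd; auto. apply Rmult_comm.
  apply loc_nz; auto.
  exists (Derive_n q (nx w) x * cf (S (nf w)) xi).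
  apply (is_derive_scal (cf (nf w))). apply cf_deriv; auto.
- apply continuous_ext_loc with (fun p : R * R => cf (nf w) (snd p) * Derive_n q (nx w) (fst p)).
  + exists (mkposreal (Rabs xi) (Rabs_pos_lt _ H)).
    intros [u v] [_ Hv]. simpl. rewrite pd; auto.
    unfold ball in Hv; simpl in Hv. unfold AbsRing_ball, abs, minus, plus, opp in Hv; simpl in Hv.
    intros E; subst v. rewrite Rplus_0_l, Rabs_Ropp in Hv. lra.
  + apply (continuous_mult (fun p : R * R => cf (nf w) (snd p)) (fun p : R * R => Derive_n q (nx w) (fst p))).
    * apply (continuous_comp snd (cf (nf w))). apply continuous_snd. apply cf_cont; auto.
    * apply (continuous_comp fst (Derive_n q (nx w))). apply continuous_fst.
      apply (ex_derive_continuous (Derive_n q (nx w))). apply Hq.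
Qed.

Lemma sign_mul xi : xi * sign xi = Rabs xi.
Proof.
destruct (Rtotal_order xi 0) as [H|[H|H]].
- rewrite sign_eq_m1, Rabs_left; auto; ring.
- subst; rewrite Rabs_R0; ring.
- rewrite sign_eq_1, Rabs_right; auto; lra.
Qed.

Lemma poisson_abs (X q : R -> R) x xi dq : xi <> 0 -> is_derive q x dq ->
  poisson (fun x xi => xi * X x) (fun x xi => Rabs xi * q x) x xi
  = Rabs xi * (X x * dq - Derive X x * q x).
Proof.
intros H Hd. unfold poisson.
rewrite (Derive_ext (fun e => e * X x) (fun e => X x * e)) by (intros; apply Rmult_comm).
rewrite Derive_scal, Derive_id.
rewrite Derive_scal, (is_derive_unique _ _ _ Hd).
rewrite Derive_scal.
rewrite (Derive_ext (fun e => Rabs e * q x) (fun e => q x * cf 0 e)) by (intros; simpl; apply Rmult_comm).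
rewrite Derive_scal, (is_derive_unique _ _ _ (cf_deriv 0 xi H)). simpl.
rewrite <- (sign_mul xi). ring.
Qed.
Lemma dplus (f g : R -> R) x a b : is_derive f x a -> is_derive g x b -> is_derive (fun y => f y + g y) x (a + b).
Proof. intros; apply (@is_derive_plus R_AbsRing R_NormedModule); auto. Qed.
Lemma dminus (f g : R -> R) x a b : is_derive f x a -> is_derive g x b -> is_derive (fun y => f y - g y) x (a - b).
Proof. intros; apply (@is_derive_minus R_AbsRing R_NormedModule); auto. Qed.
Lemma dopp (f : R -> R) x a : is_derive f x a -> is_derive (fun y => - f y) x (- a).
Proof. intros; apply (@is_derive_opp R_AbsRing R_NormedModule); auto. Qed.
Lemma dmult (f g : R -> R) x a b : is_derive f x a -> is_derive g x b -> is_derive (fun y => f y * g y) x (a * g x + f x * b).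
Proof. intros; apply (@is_derive_mult R_AbsRing); auto. intros; apply Rmult_comm. Qed.
Lemma dshift (f : R -> R) x c l : is_derive f (x + c) l -> is_derive (fun y => f (y + c)) x l.
Proof. intros H. replace l with (scal 1 l) by (change (1 * l = l); ring).
apply (is_derive_comp f (fun y => y + c)); auto. auto_derive; auto. Qed.

Lemma sm_cont f : smooth f -> forall x, continuous f x.
Proof. intros H. apply smooth_cont. apply (sm_ex 0). apply H. Qed.

Lemma sm_der f : smooth f -> forall x, is_derive f x (Derive f x).
Proof. intros H x. apply Derive_correct. apply (sm_ex 0). apply H. Qed.

Lemma smooth_plus f g : smooth f -> smooth g -> smooth (fun x => f x + g x).
Proof. intros ? ? n; apply sm_plus; auto. Qed.
Lemma smooth_mult f g : smooth f -> smooth g -> smooth (fun x => f x * g x).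
Proof. intros ? ? n; apply sm_mult; auto. Qed.
Lemma smooth_opp f : smooth f -> smooth (fun x => - f x).
Proof. intros ? n; apply sm_opp; auto. Qed.
Lemma smooth_const c : smooth (fun _ => c).
Proof. intros n; apply sm_const. Qed.
Lemma smooth_inv f : (forall x, f x <> 0) -> smooth f -> smooth (fun x => / f x).
Proof. intros ? ? n; apply sm_inv; auto. Qed.
Lemma smooth_minus f g : smooth f -> smooth g -> smooth (fun x => f x - g x).
Proof. intros; apply smooth_plus; auto; apply smooth_opp; auto. Qed.

Lemma smooth_antider w c : smooth w -> smooth (fun y => RInt w c y).
Proof.
intros H n. destruct n.
- simpl. intros x. eexists. apply antider. apply sm_cont; auto.
- split. intros x. eexists. apply antider. apply sm_cont; auto.
  apply sm_ext with w. intros x. symmetry. apply is_derive_unique. apply antider. apply sm_cont; auto.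
  apply H.
Qed.

Lemma cont_pt f x : smooth f -> continuity_pt f x.
Proof. intros H. apply continuity_pt_filterlim. apply sm_cont; auto. Qed.

Lemma exRInt f a b : smooth f -> ex_RInt f a b.
Proof. intros H. apply (@ex_RInt_continuous R_CompleteNormedModule). intros; apply sm_cont; auto. Qed.

Lemma int_lower (X : R -> R) x0 s L1 : smooth X -> X x0 = 0 -> 0 < s -> s <= 1 -> 0 < L1 ->
  (forall y, x0 - 1 <= y <= x0 + 1 -> Derive X y * Derive X y <= L1) ->
  RInt (fun x => / (X x * X x + L1 * s * s)) (x0 - PI) (x0 + PI) >= / (L1 * s).
Proof.
intros HX H0 Hs Hs1 HL HD.
pose proof PI_RGT_0 as HP. pose proof (PI2_1) as HP1.
set (eta := L1 * s * s).
assert (He : 0 < eta) by (unfold eta; apply Rmult_lt_0_compat; [apply Rmult_lt_0_compat|]; lra).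
set (f := fun x => / (X x * X x + eta)).
assert (Hpos : forall x, 0 < X x * X x + eta) by (intros x; pose proof (Rle_0_sqr (X x)); unfold Rsqr in *; lra).
assert (Hf : smooth f).
{ apply smooth_inv. intros x; specialize (Hpos x); lra.
  apply smooth_plus. apply smooth_mult; auto. apply smooth_const. }
assert (E1 : RInt f (x0 - PI) (x0 - s) + RInt f (x0 - s) (x0 + s) = RInt f (x0 - PI) (x0 + s)).
{ apply (RInt_Chasles f); apply exRInt; auto. }
assert (E2 : RInt f (x0 - PI) (x0 + s) + RInt f (x0 + s) (x0 + PI) = RInt f (x0 - PI) (x0 + PI)).
{ apply (RInt_Chasles f); apply exRInt; auto. }
assert (P1 : 0 <= RInt f (x0 - PI) (x0 - s)).
{ apply RInt_ge_0. lra. apply exRInt; auto. intros x _. left. apply Rinv_0_lt_compat. auto. }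
assert (P3 : 0 <= RInt f (x0 + s) (x0 + PI)).
{ apply RInt_ge_0. lra. apply exRInt; auto. intros x _. left. apply Rinv_0_lt_compat. auto. }
assert (Ec : RInt (fun _ => / (2 * eta)) (x0 - s) (x0 + s) = (x0 + s - (x0 - s)) * / (2 * eta)).
{ apply (RInt_const (V := R_CompleteNormedModule)). }
assert (P2 : RInt (fun _ => / (2 * eta)) (x0 - s) (x0 + s) <= RInt f (x0 - s) (x0 + s)).
{ apply RInt_le. lra. apply exRInt; apply smooth_const. apply exRInt; auto.
  intros y Hy. unfold f. apply Rinv_le_contravar. auto.
  destruct (MVT_gen X x0 y (Derive X)) as [c [Hc Ec2]].
  { intros; apply sm_der; auto. }
  { intros; apply cont_pt; auto. }
  assert (Hc2 : x0 - 1 <= c <= x0 + 1).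
  { revert Hc. unfold Rmin, Rmax. destruct (Rle_dec x0 y); intros; lra. }
  specialize (HD c Hc2). rewrite H0, Rminus_0_r in Ec2. rewrite Ec2.
  assert ((y - x0) * (y - x0) <= s * s) by nra.
  assert (Derive X c * (y - x0) * (Derive X c * (y - x0)) = (Derive X c * Derive X c) * ((y - x0) * (y - x0))) by ring.
  assert (0 <= (y - x0) * (y - x0)) by (pose proof (Rle_0_sqr (y-x0)); unfold Rsqr in *; lra).
  assert ((Derive X c * Derive X c) * ((y - x0) * (y - x0)) <= L1 * (s * s)).
  { apply Rmult_le_compat; auto. pose proof (Rle_0_sqr (Derive X c)); unfold Rsqr in *; lra. }
  assert (L1 * (s * s) = eta) by (unfold eta; ring). lra. }
rewrite Ec in P2.
assert (E3 : (x0 + s - (x0 - s)) * / (2 * eta) = / (L1 * s)) by (unfold eta; field; lra).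
change (RInt (fun x => / (X x * X x + L1 * s * s)) (x0 - PI) (x0 + PI)) with (RInt f (x0 - PI) (x0 + PI)).
lra.
Qed.

Lemma antider_per w x0 : smooth w -> periodic1 w -> RInt w (x0 - PI) (x0 + PI) = 0 ->
  periodic1 (fun x => RInt w x0 x).
Proof.
intros Hs Hp HI.
set (v := fun x => RInt w x0 x).
assert (Hd : forall x, is_derive v x (w x)) by (intros; apply antider; apply sm_cont; auto).
set (G := fun x => v (x + 2*PI) - v x).
assert (HG : forall x, is_derive G x 0).
{ intros x. replace 0 with (w (x + 2*PI) - w x) by (rewrite Hp; ring).
  apply dminus. apply dshift. apply Hd. apply Hd. }
assert (HG0 : G (x0 - PI) = 0).
{ unfold G, v. replace (x0 - PI + 2*PI) with (x0 + PI) by ring.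
  assert (E : RInt w (x0 - PI) x0 + RInt w x0 (x0 + PI) = RInt w (x0 - PI) (x0 + PI))
    by (apply (RInt_Chasles w); apply exRInt; auto).
  assert (E2 : - RInt w (x0 - PI) x0 = RInt w x0 (x0 - PI))
    by (apply (opp_RInt_swap (V := R_CompleteNormedModule)); apply exRInt; auto).
  lra. }
intros x. change (v (x + 2*PI) = v x).
destruct (MVT_gen G (x0 - PI) x (fun _ => 0)) as [c [_ Hc]].
{ intros; apply HG. }
{ intros y _. apply continuity_pt_filterlim. apply (ex_derive_continuous G). eexists; apply HG. }
assert (G x = 0) by lra. unfold G in H. lra.
Qed.

Lemma key (X : R -> R)
  (HXs : smooth1 X) (HXp : periodic1 X)
  (Hzero : exists x0, X x0 = 0)
  (Hnd : forall x0, X x0 = 0 -> Derive X x0 <> 0) :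
  exists q delta, smooth q /\ periodic1 q /\ 0 < delta /\
    (forall x, X x * Derive q x - Derive X x * q x >= delta) /\ exists x1, q x1 = -1.
Proof.
pose proof PI_RGT_0 as HP.
destruct Hzero as [x0 Hx0].
assert (SX : smooth X) by (apply Derive_n_smooth; auto).
set (Xd := Derive X). assert (SXd : smooth Xd) by (apply smooth_Derive; auto).
set (Xdd := Derive Xd). assert (SXdd : smooth Xdd) by (apply smooth_Derive; auto).
assert (PXd : periodic1 Xd) by (intro x; apply Derive_per; [exact HXp | apply (sm_ex 0); apply SX]).
assert (PXdd : periodic1 Xdd) by (intro x; apply Derive_per; [exact PXd | apply (sm_ex 0); apply SXd]).
destruct (per_min (fun x => Xd x * Xd x + X x * X x)) as [y0 Hy0].
{ intros x. rewrite PXd, HXp. reflexivity. }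
{ apply sm_cont. apply smooth_plus; apply smooth_mult; auto. }
set (c0 := Xd y0 * Xd y0 + X y0 * X y0) in *.
assert (Hc0 : 0 < c0).
{ unfold c0. pose proof (Rle_0_sqr (Xd y0)). pose proof (Rle_0_sqr (X y0)). unfold Rsqr in *.
  destruct (Req_dec (X y0) 0) as [E|E].
  - specialize (Hnd y0 E). pose proof (Rsqr_pos_lt _ Hnd). unfold Rsqr in *. fold Xd in H1. lra.
  - pose proof (Rsqr_pos_lt _ E). unfold Rsqr in *. lra. }
destruct (per_max (fun x => Xdd x * Xdd x)) as [y2 Hy2].
{ intros x. rewrite PXdd. reflexivity. }
{ apply sm_cont. apply smooth_mult; auto. }
set (K2 := Xdd y2 * Xdd y2) in *.
assert (HK2 : 0 <= K2) by (unfold K2; pose proof (Rle_0_sqr (Xdd y2)); unfold Rsqr in *; lra).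
set (r := / c0).
assert (Hr : 0 < r) by (apply Rinv_0_lt_compat; auto).
assert (Hcr : c0 * r = 1) by (unfold r; field; lra).
set (A := K2 * r + 1). set (B := c0 / 4).
assert (HA : 0 < A) by (unfold A; nra).
assert (HB : 0 < B) by (unfold B; lra).
assert (Hm : forall x, Xd x * Xd x - X x * Xdd x + A * (X x * X x) >= 3 * c0 / 4).
{ intros x. set (p := X x * Xdd x).
  assert (E : (c0/2 - p) * (c0/2 - p) * r = c0 / 4 - p + p * p * r).
  { unfold r. field. lra. }
  assert (P0 : 0 <= (c0/2 - p) * (c0/2 - p) * r).
  { apply Rmult_le_pos; auto. pose proof (Rle_0_sqr (c0/2 - p)); unfold Rsqr in *; lra. lra. }
  assert (P1 : p * p * r <= (X x * X x) * K2 * r).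
  { unfold p. replace (X x * Xdd x * (X x * Xdd x) * r) with ((X x * X x) * r * (Xdd x * Xdd x)) by ring.
    replace (X x * X x * K2 * r) with ((X x * X x) * r * K2) by ring.
    apply Rmult_le_compat_l. apply Rmult_le_pos; [pose proof (Rle_0_sqr (X x)); unfold Rsqr in *; lra | lra].
    apply Hy2. }
  specialize (Hy0 x).
  assert (E2 : A * (X x * X x) = X x * X x * K2 * r + X x * X x) by (unfold A; ring).
  lra. }
destruct (continuity_ab_maj (fun y => Xd y * Xd y) (x0 - 1) (x0 + 1)) as [ym [Hym _]].
{ lra. }
{ intros; apply cont_pt. apply smooth_mult; auto. }
set (L1 := Xd ym * Xd ym + 1).
assert (HL1 : 0 < L1) by (unfold L1; pose proof (Rle_0_sqr (Xd ym)); unfold Rsqr in *; lra).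
assert (HD : forall y, x0 - 1 <= y <= x0 + 1 -> Derive X y * Derive X y <= L1).
{ intros y Hy. specialize (Hym y Hy). simpl in Hym. fold Xd. unfold L1. lra. }
assert (HPAL : 0 < 2 * PI * A * L1).
{ assert (0 < 2 * PI) by lra. assert (0 < 2 * PI * A) by (apply Rmult_lt_0_compat; lra).
  apply Rmult_lt_0_compat; lra. }
set (s := Rmin 1 (B / (2 * PI * A * L1))).
assert (HQ : 0 < B / (2 * PI * A * L1)).
{ apply Rdiv_lt_0_compat; [exact HB|]. exact HPAL. }
assert (Hs : 0 < s) by (unfold s; apply Rmin_glb_lt; lra).
assert (Hs1 : s <= 1) by (unfold s; apply Rmin_l).
assert (Hs2 : s <= B / (2 * PI * A * L1)) by (unfold s; apply Rmin_r).
pose proof (int_lower X x0 s L1 SX Hx0 Hs Hs1 HL1 HD) as HJ.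
set (eta := L1 * s * s) in *.
assert (He : 0 < eta) by (unfold eta; apply Rmult_lt_0_compat; [apply Rmult_lt_0_compat|]; lra).
set (f := fun x => / (X x * X x + eta)) in *.
assert (Hpos : forall x, 0 < X x * X x + eta) by (intros x; pose proof (Rle_0_sqr (X x)); unfold Rsqr in *; lra).
assert (Sf : smooth f).
{ apply smooth_inv. intros x; specialize (Hpos x); lra.
  apply smooth_plus. apply smooth_mult; auto. apply smooth_const. }
set (J := RInt f (x0 - PI) (x0 + PI)) in *.
assert (HBJ : 2 * PI * A <= B * J).
{ assert (T : 2 * PI * A * L1 * s <= B).
  { apply Rmult_le_compat_l with (r := 2 * PI * A * L1) in Hs2.
    2: { left; exact HPAL. }
    assert (E : 2 * PI * A * L1 * (B / (2 * PI * A * L1)) = B).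
    { field. first [apply Rgt_not_eq; exact HPAL | repeat split; lra]. }
    lra. }
  assert (T2 : B * / (L1 * s) <= B * J) by (apply Rmult_le_compat_l; lra).
  assert (T3 : 2 * PI * A <= B * / (L1 * s)).
  { assert (E : B * / (L1 * s) = 2 * PI * A + (B - 2 * PI * A * L1 * s) * / (L1 * s)) by (field; lra).
    rewrite E. assert (0 <= (B - 2 * PI * A * L1 * s) * / (L1 * s)).
    { apply Rmult_le_pos. lra. left. apply Rinv_0_lt_compat. apply Rmult_lt_0_compat; lra. }
    lra. }
  lra. }
set (w0 := fun x => A - B * f x).
assert (Sw0 : smooth w0) by (apply smooth_minus; [apply smooth_const | apply smooth_mult; [apply smooth_const|auto]]).
assert (HI0 : RInt w0 (x0 - PI) (x0 + PI) = (x0 + PI - (x0 - PI)) * A - B * J).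
{ apply is_RInt_unique.
  apply (is_RInt_minus (V := R_CompleteNormedModule) (fun _ => A) (fun x => B * f x)).
  apply (is_RInt_const (V := R_CompleteNormedModule)).
  apply (is_RInt_scal (V := R_CompleteNormedModule) f).
  apply (RInt_correct (V := R_CompleteNormedModule)). apply exRInt; auto. }
set (I0 := RInt w0 (x0 - PI) (x0 + PI)) in *.
assert (HI0n : I0 <= 0) by (rewrite HI0; lra).
set (w := fun x => w0 x - I0 / (2 * PI)).
assert (Sw : smooth w) by (apply smooth_minus; [auto | apply smooth_const]).
assert (Pf : periodic1 f) by (intros x; unfold f; rewrite HXp; reflexivity).
assert (Pw : periodic1 w) by (intros x; unfold w, w0; rewrite Pf; reflexivity).
assert (HIw : RInt w (x0 - PI) (x0 + PI) = 0).
{ assert (E : RInt w (x0 - PI) (x0 + PI) = I0 - (x0 + PI - (x0 - PI)) * (I0 / (2 * PI))).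
  { apply is_RInt_unique.
    apply (is_RInt_minus (V := R_CompleteNormedModule) w0 (fun _ => I0 / (2 * PI))).
    apply (RInt_correct (V := R_CompleteNormedModule)). apply exRInt; auto.
    apply (is_RInt_const (V := R_CompleteNormedModule)). }
  rewrite E. assert (E2 : (x0 + PI - (x0 - PI)) * (I0 / (2 * PI)) = I0) by (field; lra). rewrite E2. apply Rminus_diag_eq. reflexivity. }
set (v := fun x => RInt w x0 x).
assert (Sv : smooth v) by (apply smooth_antider; auto).
assert (Pv : periodic1 v) by (apply antider_per; auto).
assert (Dv : forall x, is_derive v x (w x)) by (intros; apply antider; apply sm_cont; auto).
destruct (Classical_Prop.classic (exists x, X x <> 0)) as [[x1 Hx1] | Hall].
2: { exfalso. apply (Hnd x0 Hx0).
     rewrite (Derive_ext X (fun _ => 0)). apply Derive_const.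
     intros t. destruct (Req_dec (X t) 0); auto. exfalso; apply Hall; exists t; auto. }
set (t := (Xd x1 - 1) / X x1 - v x1).
set (q := fun x => - Xd x + X x * (v x + t)).
exists q, (c0 / 2).
split; [|split; [|split; [|split]]].
- apply smooth_plus. apply smooth_opp; auto. apply smooth_mult; auto. apply smooth_plus; auto. apply smooth_const.
- intros x. unfold q. rewrite PXd, HXp, Pv. reflexivity.
- lra.
- intros x.
  assert (Dq : is_derive q x (- Xdd x + (Xd x * (v x + t) + X x * (w x + 0)))).
  { apply (dplus (fun y => - Xd y) (fun y => X y * (v y + t))).
    apply (dopp Xd). apply (sm_der Xd); auto.
    apply (dmult X (fun y => v y + t)). apply (sm_der X); auto.
    apply (dplus v (fun _ => t)). auto. apply dconst. }
  rewrite (is_derive_unique _ _ _ Dq). fold Xd.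
  specialize (Hm x).
  assert (Ff : f x * (X x * X x + eta) = 1) by (unfold f; field; specialize (Hpos x); lra).
  assert (Ff2 : 0 <= eta * f x) by (apply Rmult_le_pos; [lra | left; unfold f; apply Rinv_0_lt_compat; auto]).
  assert (Hxx : 0 <= X x * X x) by (pose proof (Rle_0_sqr (X x)); unfold Rsqr in *; lra).
  assert (Hw : X x * X x * w x >= A * (X x * X x) - B).
  { unfold w, w0.
    assert (E : X x * X x * (A - B * f x - I0 / (2 * PI)) = A * (X x * X x) - B * (X x * X x * f x) + (X x * X x) * (- I0 / (2 * PI))) by (field; lra).
    rewrite E.
    assert (0 <= (X x * X x) * (- I0 / (2 * PI))).
    { apply Rmult_le_pos; auto. unfold Rdiv. apply Rmult_le_pos. lra. left; apply Rinv_0_lt_compat; lra. }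
    assert (X x * X x * f x <= 1) by lra.
    assert (B * (X x * X x * f x) <= B) by (rewrite <- (Rmult_1_r B) at 2; apply Rmult_le_compat_l; lra).
    lra. }
  unfold q.
  assert (E : X x * (- Xdd x + (Xd x * (v x + t) + X x * (w x + 0))) - Xd x * (- Xd x + X x * (v x + t))
     = Xd x * Xd x - X x * Xdd x + X x * X x * w x) by ring.
  rewrite E. assert (B = c0 / 4) by reflexivity. lra.
- exists x1. unfold q, t. field. auto.
Qed.
Theorem mainTheorem16 (X : R -> R)
  (HXs : smooth1 X) (HXp : periodic1 X)
  (Hzero : exists x0, X x0 = 0)
  (Hnd : forall x0, X x0 = 0 -> Derive X x0 <> 0) :
  let h := fun x xi : R => xi * X x in
  exists (a : R -> R -> R) (delta : R),
    periodic2 a /\ smooth2_on off_zero a /\ pos_homogeneous 1 a /\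
    0 < delta /\
    (forall x xi, xi <> 0 -> poisson h a x xi >= delta * Rabs xi) /\
    (exists W : R -> Prop,
        open W /\ (exists x, W x) /\
        forall x xi, W x -> xi <> 0 -> a x xi <= - Rabs xi / 2).
Proof.
intros h. destruct (key X HXs HXp Hzero Hnd) as [q [d [Hs [Hp [Hd [HL [x1 Hx1]]]]]]].
assert (Hex : forall x, ex_derive q x) by (apply (sm_ex 0); apply Hs).
exists (fun x xi => Rabs xi * q x), d.
split; [|split; [|split; [|split; [|split]]]].
- intros x xi. rewrite Hp. reflexivity.
- apply smooth2_abs. apply smooth_Derive_n. auto.
- intros x xi lam Hxi Hlam. rewrite Rpower_1 by auto. rewrite Rabs_mult, (Rabs_right lam) by lra. ring.
- auto.
- intros x xi Hxi. unfold h. rewrite (poisson_abs X q x xi (Derive q x)); auto.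
  2: apply Derive_correct; auto.
  specialize (HL x). pose proof (Rabs_pos xi). nra.
- exists (fun x => q x < -1/2). split; [|split].
  + apply (open_comp q (fun u => u < -1/2)).
    intros x _. apply (smooth_cont q Hex x). apply open_lt.
  + exists x1. lra.
  + intros x xi Hx _. pose proof (Rabs_pos xi). nra.
Qed.
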